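(* Let $a,b>0$, $D=[0,a]\times[0,b]$, and let $f:D\to\mathbb{R}$ be a $C^3$ function. Let $p\in\operatorname{int}D$ be a local maximum of $f$ at which the Hessian of $f$ is negative definite. Then there exist a neighborhood $U$ of $p$ and a number $r>0$ such that for every sufficiently large $n$ for which $D_n$ is nondegenerate, there is exactly one grid vertex $p_{i,j}$ of $D_n$ in $U$ which is maximal within its grid circle $C_r(p_{i,j})$.
   Context: For $n\ge1$, $D_n$ denotes the division of $D$ into $n\times n$ congruent rectangles; its grid vertices are the points $p_{i,j}=\left(\frac{i}{n}a,\frac{j}{n}b\right)$, $0\le i,j\le n$. $D_n$ is called nondegenerate if $f(p)\neq f(p')$ for any two distinct grid vertices $p\neq p'$ of $D_n$. The grid circle of centre $p_{i,j}$ and radius $r$ is $C_r(p_{i,j})=\{p_{l,m}: 0\le l,m\le n,\ \max\{|l-i|,|m-j|\}\le r\}$. A grid vertex $p_{i,j}$ is minimal (resp. maximal) within $C_r(p_{i,j})$ if $f(p_{i,j})\le f(q)$ (resp. $f(p_{i,j})\ge f(q)$) for every $q\in C_r(p_{i,j})$. *)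

(* Defs.v *)
From Stdlib Require Export Reals.
Open Scope R_scope.

Definition dist2 (x y x' y' : R) : R := sqrt ((x - x')^2 + (y - y')^2).

Definition open2 (O : R -> R -> Prop) : Prop :=
  forall x y, O x y -> exists d, d > 0 /\
    forall x' y', dist2 x y x' y' < d -> O x' y'.

Definition cont_on2 (g : R -> R -> R) (O : R -> R -> Prop) : Prop :=
  forall x y, O x y -> forall eps, eps > 0 -> exists d, d > 0 /\
    forall x' y', dist2 x y x' y' < d -> Rabs (g x' y' - g x y) < eps.

Definition partial_x_on (g gx : R -> R -> R) (O : R -> R -> Prop) : Prop :=
  forall x y, O x y -> derivable_pt_lim (fun t => g t y) x (gx x y).

Definition partial_y_on (g gy : R -> R -> R) (O : R -> R -> Prop) : Prop :=
  forall x y, O x y -> derivable_pt_lim (fun t => g x t) y (gy x y).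

Fixpoint Ck_on (k : nat) (g : R -> R -> R) (O : R -> R -> Prop) : Prop :=
  match k with
  | O => cont_on2 g O
  | S k' => cont_on2 g O /\ exists gx gy,
      partial_x_on g gx O /\ partial_y_on g gy O /\
      Ck_on k' gx O /\ Ck_on k' gy O
  end.

Definition inD (a b x y : R) : Prop := 0 <= x <= a /\ 0 <= y <= b.

Definition C3_on_D (a b : R) (f : R -> R -> R) : Prop :=
  exists O, open2 O /\ (forall x y, inD a b x y -> O x y) /\ Ck_on 3 f O.

Definition local_max_D (a b : R) (f : R -> R -> R) (px py : R) : Prop :=
  exists d, d > 0 /\ forall x y, inD a b x y -> dist2 px py x y < d ->
    f x y <= f px py.

Definition hessian_neg_def (f : R -> R -> R) (px py : R) : Prop :=
  exists O fx fy fxx fxy fyx fyy,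
    open2 O /\ O px py /\
    partial_x_on f fx O /\ partial_y_on f fy O /\
    partial_x_on fx fxx O /\ partial_y_on fx fxy O /\
    partial_x_on fy fyx O /\ partial_y_on fy fyy O /\
    forall v w, (v <> 0 \/ w <> 0) ->
      v * (fxx px py * v + fxy px py * w) + w * (fyx px py * v + fyy px py * w) < 0.

Definition gx (a : R) (n i : nat) : R := INR i / INR n * a.
Definition gy (b : R) (n j : nat) : R := INR j / INR n * b.

Definition nondegenerate (a b : R) (f : R -> R -> R) (n : nat) : Prop :=
  forall i j l m, (i <= n)%nat -> (j <= n)%nat -> (l <= n)%nat -> (m <= n)%nat ->
    (i, j) <> (l, m) -> f (gx a n i) (gy b n j) <> f (gx a n l) (gy b n m).

Definition in_grid_circle (n : nat) (r : R) (i j l m : nat) : Prop :=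
  (l <= n)%nat /\ (m <= n)%nat /\
  Rmax (Rabs (INR l - INR i)) (Rabs (INR m - INR j)) <= r.

Definition maximal_in_circle (a b : R) (f : R -> R -> R) (n : nat) (r : R)
    (i j : nat) : Prop :=
  forall l m, in_grid_circle n r i j l m ->
    f (gx a n l) (gy b n m) <= f (gx a n i) (gy b n j).

Definition nbhd (U : R -> R -> Prop) (px py : R) : Prop :=
  exists d, d > 0 /\ forall x y, dist2 px py x y < d -> U x y.

(* Main.v *)
Require Import Defs.
From Stdlib Require Import Reals Lra Lia Psatz Classical ZArith.
From Coquelicot Require Import Coquelicot.
Open Scope R_scope.

Lemma dist2_le x y x' y' : dist2 x y x' y' <= Rabs (x - x') + Rabs (y - y').
Proof.
  unfold dist2.
  rewrite <- (sqrt_pow2 (Rabs (x - x') + Rabs (y - y'))).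
  2: { generalize (Rabs_pos (x-x')) (Rabs_pos (y-y')); lra. }
  apply sqrt_le_1_alt.
  rewrite <- (pow2_abs (x - x')), <- (pow2_abs (y - y')).
  generalize (Rabs_pos (x-x')) (Rabs_pos (y-y')); nra.
Qed.

Lemma abs_le_dist2 x y x' y' : Rabs (x - x') <= dist2 x y x' y'.
Proof.
  unfold dist2.
  rewrite <- (sqrt_pow2 (Rabs (x - x'))) by apply Rabs_pos.
  apply sqrt_le_1_alt. rewrite pow2_abs. generalize (pow2_ge_0 (x-x')) (pow2_ge_0 (y-y')); lra.
Qed.

Lemma abs_le_dist2' x y x' y' : Rabs (y - y') <= dist2 x y x' y'.
Proof.
  unfold dist2.
  rewrite <- (sqrt_pow2 (Rabs (y - y'))) by apply Rabs_pos.
  apply sqrt_le_1_alt. rewrite pow2_abs. generalize (pow2_ge_0 (x-x')) (pow2_ge_0 (y-y')); lra.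
Qed.

Lemma open_box O x y : open2 O -> O x y ->
  exists d, d > 0 /\ forall u v, Rabs (u - x) < d -> Rabs (v - y) < d -> O u v.
Proof.
  intros HO H. destruct (HO x y H) as [d [Hd Hb]].
  exists (d/2). split. lra. intros u v Hu Hv. apply Hb.
  eapply Rle_lt_trans. apply dist2_le.
  rewrite Rabs_minus_sym. rewrite (Rabs_minus_sym y). lra.
Qed.

Lemma diff_partials g gx gy O x y : open2 O -> partial_x_on g gx O ->
  partial_y_on g gy O -> cont_on2 gx O -> O x y ->
  differentiable_pt_lim g x y (gx x y) (gy x y).
Proof.
  intros HO Hx Hy Hc Hxy.
  apply filterdiff_differentiable_pt_lim.
  eapply filterdiff_ext_lin.
  - apply (is_derive_filterdiff g x y gx (gy x y)).
    + apply (locally_2d_locally (fun u v => is_derive (fun z => g z v) u (gx u v))).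
      destruct (open_box O x y HO Hxy) as [d [Hd Hb]].
      exists (mkposreal d Hd). intros u v Hu Hv. simpl in *.
      apply is_derive_Reals. apply Hx. apply Hb; auto.
    + apply is_derive_Reals. apply Hy; auto.
    + apply (continuity_2d_pt_filterlim gx x y).
      intros eps. destruct (Hc x y Hxy eps (cond_pos eps)) as [d [Hd Hb]].
      exists (mkposreal (d/2) ltac:(lra)). intros u v Hu Hv. simpl in *.
      apply Hb. eapply Rle_lt_trans. apply dist2_le.
      rewrite Rabs_minus_sym. rewrite (Rabs_minus_sym y). lra.
  - intros [u v]. simpl. unfold plus, scal; simpl. unfold mult; simpl. ring.
Qed.

Lemma line_deriv g gx gy O x0 y0 v1 v2 t : open2 O -> partial_x_on g gx O ->
  partial_y_on g gy O -> cont_on2 gx O -> O (x0 + t * v1) (y0 + t * v2) ->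
  derivable_pt_lim (fun s => g (x0 + s * v1) (y0 + s * v2)) t
    (gx (x0 + t * v1) (y0 + t * v2) * v1 + gy (x0 + t * v1) (y0 + t * v2) * v2).
Proof.
  intros HO Hx Hy Hc H.
  apply (derivable_pt_lim_comp_2d g (fun s => x0 + s * v1) (fun s => y0 + s * v2)).
  - eapply diff_partials; eauto.
  - apply is_derive_Reals. auto_derive; auto; ring.
  - apply is_derive_Reals. auto_derive; auto; ring.
Qed.
Lemma L1 (h h' h'' : R -> R) :
  (forall t, 0 <= t <= 1 -> derivable_pt_lim h t (h' t)) ->
  (forall t, 0 <= t <= 1 -> derivable_pt_lim h' t (h'' t)) ->
  (forall t, 0 <= t <= 1 -> h'' t <= 0) -> h 1 <= h 0 + h' 0.
Proof.
  intros H1 H2 H3.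
  destruct (MVT_cor2 h h' 0 1 ltac:(lra) ltac:(intros; apply H1; lra)) as [c [Hc Hc']].
  destruct (Req_dec c 0) as [E|E]. lra.
  destruct (MVT_cor2 h' h'' 0 c ltac:(lra) ltac:(intros; apply H2; lra)) as [d [Hd Hd']].
  assert (h'' d <= 0) by (apply H3; lra).
  assert (h'' d * (c - 0) <= 0) by nra. lra.
Qed.

Lemma taylor_up (G G' G'' : R -> R) c :
  (forall t, 0 <= t <= 1 -> derivable_pt_lim G t (G' t)) ->
  (forall t, 0 <= t <= 1 -> derivable_pt_lim G' t (G'' t)) ->
  (forall t, 0 <= t <= 1 -> G'' t <= c) -> G 1 <= G 0 + G' 0 + c / 2.
Proof.
  intros H1 H2 H3.
  assert (L := L1 (fun s => G s - c / 2 * s ^ 2) (fun s => G' s - c * s) (fun s => G'' s - c)).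
  simpl in L.
  assert (G 1 - c / 2 * (1 * (1 * 1)) <= G 0 - c / 2 * (0 * (0 * 1)) + (G' 0 - c * 0)).
  { apply L.
    - intros t Ht. apply is_derive_Reals. specialize (H1 t Ht). apply is_derive_Reals in H1.
      assert (Hq : is_derive (fun s => c / 2 * (s * (s * 1))) t (c * t)) by (auto_derive; auto; field).
      pose proof (is_derive_minus _ _ _ _ _ H1 Hq) as H.
      eapply is_derive_ext. 2: { replace (G' t - c * t) with (minus (G' t) (c * t)). exact H.
        unfold minus, plus, opp; simpl. ring. } intros; unfold minus, plus, opp; simpl; ring.
    - intros t Ht. apply is_derive_Reals. specialize (H2 t Ht). apply is_derive_Reals in H2.
      assert (Hq : is_derive (fun s => c * s) t c) by (auto_derive; auto; ring).
      pose proof (is_derive_minus _ _ _ _ _ H2 Hq) as H.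
      eapply is_derive_ext. 2: { replace (G'' t - c) with (minus (G'' t) c). exact H.
        unfold minus, plus, opp; simpl. ring. } intros; unfold minus, plus, opp; simpl; ring.
    - intros t Ht. specialize (H3 t Ht). lra. }
  lra.
Qed.

Lemma taylor_lo (G G' G'' : R -> R) c :
  (forall t, 0 <= t <= 1 -> derivable_pt_lim G t (G' t)) ->
  (forall t, 0 <= t <= 1 -> derivable_pt_lim G' t (G'' t)) ->
  (forall t, 0 <= t <= 1 -> c <= G'' t) -> G 0 + G' 0 + c / 2 <= G 1.
Proof.
  intros H1 H2 H3.
  assert (L := taylor_up (fun s => - G s) (fun s => - G' s) (fun s => - G'' s) (- c)).
  assert (- G 1 <= - G 0 + - G' 0 + - c / 2).
  { apply L.
    - intros; apply derivable_pt_lim_opp; auto.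
    - intros; apply derivable_pt_lim_opp; auto.
    - intros t Ht; specialize (H3 t Ht); lra. }
  lra.
Qed.

Lemma dpl_comb (F G : R -> R) t a b la lb :
  derivable_pt_lim F t la -> derivable_pt_lim G t lb ->
  derivable_pt_lim (fun s => F s * a + G s * b) t (la * a + lb * b).
Proof.
  intros H1 H2. apply is_derive_Reals in H1. apply is_derive_Reals in H2.
  apply is_derive_Reals.
  apply (is_derive_scal F t a) in H1. apply (is_derive_scal G t b) in H2.
  pose proof (is_derive_plus _ _ _ _ _ H1 H2) as H.
  eapply is_derive_ext. 2: { replace (la * a + lb * b) with (plus (a * la) (b * lb)). exact H.
    unfold plus; simpl; ring. }
  intros; unfold plus; simpl; ring.
Qed.

Lemma seg_abs a b s d : Rabs a < d -> Rabs b < d -> 0 <= s <= 1 -> Rabs (a + s * (b - a)) < d.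
Proof.
  intros Ha Hb Hs. apply Rabs_def2 in Ha. apply Rabs_def2 in Hb.
  destruct Ha as [Ha1 Ha2]. destruct Hb as [Hb1 Hb2].
  assert (0 <= (1 - s) * (d - a)) by (apply Rmult_le_pos; lra).
  assert (0 <= s * (d - b)) by (apply Rmult_le_pos; lra).
  assert (0 <= (1 - s) * (a + d)) by (apply Rmult_le_pos; lra).
  assert (0 <= s * (b + d)) by (apply Rmult_le_pos; lra).
  destruct (Req_dec s 1) as [E|E].
  - subst. apply Rabs_def1; lra.
  - assert (0 < (1 - s) * (d - a)) by (apply Rmult_lt_0_compat; lra).
    assert (0 < (1 - s) * (a + d)) by (apply Rmult_lt_0_compat; lra).
    apply Rabs_def1; nra.
Qed.

Lemma floor_nat x : 0 <= x -> exists i : nat, INR i <= x < INR i + 1.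
Proof.
  intros Hx. destruct (base_Int_part x) as [H1 H2].
  assert (Hz : (-1 < Int_part x)%Z) by (apply lt_IZR; simpl; lra).
  exists (Z.to_nat (Int_part x)). rewrite INR_IZR_INZ, Z2Nat.id by lia. lra.
Qed.

Lemma grid_floor m1 a n : a > 0 -> (0 < n)%nat -> 0 <= m1 < a ->
  exists i, (i <= n)%nat /\ INR i * (a / INR n) <= m1 < INR i * (a / INR n) + a / INR n.
Proof.
  intros Ha Hn Hm.
  assert (Hn' : 0 < INR n) by (apply lt_0_INR; lia).
  set (h := a / INR n).
  assert (Hh : h > 0) by (unfold h; apply Rdiv_lt_0_compat; lra).
  destruct (floor_nat (m1 / h)) as [i [Hi1 Hi2]].
  { unfold Rdiv; apply Rmult_le_pos; [lra | left; apply Rinv_0_lt_compat; lra]. }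
  exists i. split.
  - assert (INR i < INR n).
    { apply (Rle_lt_trans _ (m1 / h)); auto.
      apply (Rmult_lt_reg_r h); auto. unfold Rdiv. rewrite Rmult_assoc, Rinv_l by lra.
      unfold h. field_simplify; lra. }
    apply INR_lt in H. lia.
  - split.
    + apply (Rmult_le_compat_r h) in Hi1; try lra.
      unfold Rdiv in Hi1. rewrite Rmult_assoc, Rinv_l, Rmult_1_r in Hi1 by lra. lra.
    + apply (Rmult_lt_compat_r h) in Hi2; try lra.
      unfold Rdiv in Hi2. rewrite Rmult_assoc, Rinv_l, Rmult_1_r in Hi2 by lra. lra.
Qed.

Lemma max1 (N : nat) (P : nat -> Prop) (F : nat -> R) :
  (exists i, (i <= N)%nat /\ P i) ->
  exists i, (i <= N)%nat /\ P i /\ forall l, (l <= N)%nat -> P l -> F l <= F i.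
Proof.
  induction N as [|N IH]; intros [i0 [Hi0 Pi0]].
  - exists 0%nat. assert (i0 = 0%nat) by lia. subst. repeat split; auto.
    intros l Hl Pl. assert (l = 0%nat) by lia. subst. lra.
  - destruct (classic (exists i, (i <= N)%nat /\ P i)) as [Hex|Hno].
    + destruct (IH Hex) as [i [Hi [Pi Hmax]]].
      destruct (classic (P (S N))) as [PS|nPS].
      * destruct (Rle_or_lt (F (S N)) (F i)) as [Hle|Hlt].
        -- exists i. repeat split; auto. intros l Hl Pl.
           destruct (Nat.eq_dec l (S N)). subst; auto. apply Hmax; auto; lia.
        -- exists (S N). repeat split; auto. intros l Hl Pl.
           destruct (Nat.eq_dec l (S N)). subst; lra.
           assert (F l <= F i) by (apply Hmax; auto; lia). lra.
      * exists i. repeat split; auto. intros l Hl Pl.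
        destruct (Nat.eq_dec l (S N)). subst; contradiction. apply Hmax; auto; lia.
    + assert (PS : P (S N)).
      { destruct (Nat.eq_dec i0 (S N)). subst; auto.
        exfalso; apply Hno; exists i0; split; auto; lia. }
      exists (S N). repeat split; auto. intros l Hl Pl.
      destruct (Nat.eq_dec l (S N)). subst; lra.
      exfalso; apply Hno; exists l; split; auto; lia.
Qed.

Lemma max2 (n N : nat) (P : nat -> nat -> Prop) (F : nat -> nat -> R) :
  (exists i j, (i <= N)%nat /\ (j <= n)%nat /\ P i j) ->
  exists i j, (i <= N)%nat /\ (j <= n)%nat /\ P i j /\
    forall l m, (l <= N)%nat -> (m <= n)%nat -> P l m -> F l m <= F i j.
Proof.
  induction N as [|N IH]; intros [i0 [j0 [Hi0 [Hj0 Pi0]]]].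
  - assert (i0 = 0%nat) by lia. subst.
    destruct (max1 n (P 0%nat) (F 0%nat)) as [j [Hj [Pj Hm]]]. exists j0; auto.
    exists 0%nat, j. repeat split; auto. intros l m Hl Hm' Pl.
    assert (l = 0%nat) by lia. subst. auto.
  - destruct (classic (exists j, (j <= n)%nat /\ P (S N) j)) as [Hr|Hr].
    + destruct (max1 n (P (S N)) (F (S N)) Hr) as [j1 [Hj1 [Pj1 Hm1]]].
      destruct (classic (exists i j, (i <= N)%nat /\ (j <= n)%nat /\ P i j)) as [Hex|Hno].
      * destruct (IH Hex) as [i [j [Hi [Hj [Pij Hm]]]]].
        destruct (Rle_or_lt (F (S N) j1) (F i j)) as [Hle|Hlt].
        -- exists i, j. repeat split; auto. intros l m Hl Hm' Pl.
           destruct (Nat.eq_dec l (S N)). subst. specialize (Hm1 m Hm' Pl). lra.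
           apply Hm; auto; lia.
        -- exists (S N), j1. repeat split; auto. intros l m Hl Hm' Pl.
           destruct (Nat.eq_dec l (S N)). subst. auto.
           assert (F l m <= F i j) by (apply Hm; auto; lia). lra.
      * exists (S N), j1. repeat split; auto. intros l m Hl Hm' Pl.
        destruct (Nat.eq_dec l (S N)). subst. auto.
        exfalso. apply Hno. exists l, m. repeat split; auto; lia.
    + assert (Hex : exists i j, (i <= N)%nat /\ (j <= n)%nat /\ P i j).
      { destruct (Nat.eq_dec i0 (S N)). subst. exfalso; apply Hr; eauto.
        exists i0, j0. repeat split; auto; lia. }
      destruct (IH Hex) as [i [j [Hi [Hj [Pij Hm]]]]].
      exists i, j. repeat split; auto. intros l m Hl Hm' Pl.
      destruct (Nat.eq_dec l (S N)). subst. exfalso; apply Hr; eauto.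
      apply Hm; auto; lia.
Qed.

Section Core.
Variables f fx fy fxx fxy fyx fyy : R -> R -> R.
Variable O : R -> R -> Prop.
Variables px py δ μ M : R.
Hypothesis HO : open2 O.
Hypothesis Hfx : partial_x_on f fx O.
Hypothesis Hfy : partial_y_on f fy O.
Hypothesis Hfxx : partial_x_on fx fxx O.
Hypothesis Hfxy : partial_y_on fx fxy O.
Hypothesis Hfyx : partial_x_on fy fyx O.
Hypothesis Hfyy : partial_y_on fy fyy O.
Hypothesis Hcx : cont_on2 fx O.
Hypothesis Hcxx : cont_on2 fxx O.
Hypothesis Hcyx : cont_on2 fyx O.
Definition inW x y := Rabs (x - px) < δ /\ Rabs (y - py) < δ.
Hypothesis HW : forall x y, inW x y -> O x y.
Definition Qf a b v w := (fxx a b * v + fxy a b * w) * v + (fyx a b * v + fyy a b * w) * w.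
Hypothesis HQup : forall x y, inW x y -> forall v w, Qf x y v w <= - μ * (v^2 + w^2).
Hypothesis HQlo : forall x y, inW x y -> forall v w, - (2 * M) * (v^2 + w^2) <= Qf x y v w.
Hypothesis Hgx0 : fx px py = 0.
Hypothesis Hgy0 : fy px py = 0.
Hypothesis Hmu : μ > 0.
Hypothesis HM : M > 0.
Hypothesis Hd : δ > 0.

Lemma seg_in x y x' y' s : inW x y -> inW x' y' -> 0 <= s <= 1 ->
  inW (x + s * (x' - x)) (y + s * (y' - y)).
Proof.
  intros [H1 H2] [H3 H4] Hs. split.
  - replace (x + s * (x' - x) - px) with ((x - px) + s * ((x' - px) - (x - px))) by ring.
    apply seg_abs; auto.
  - replace (y + s * (y' - y) - py) with ((y - py) + s * ((y' - py) - (y - py))) by ring.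
    apply seg_abs; auto.
Qed.

Lemma G_derivs x y x' y' t : inW x y -> inW x' y' -> 0 <= t <= 1 ->
  derivable_pt_lim (fun s => f (x + s * (x' - x)) (y + s * (y' - y))) t
    (fx (x + t * (x' - x)) (y + t * (y' - y)) * (x' - x) +
     fy (x + t * (x' - x)) (y + t * (y' - y)) * (y' - y)) /\
  derivable_pt_lim (fun s => fx (x + s * (x' - x)) (y + s * (y' - y)) * (x' - x) +
     fy (x + s * (x' - x)) (y + s * (y' - y)) * (y' - y)) t
    (Qf (x + t * (x' - x)) (y + t * (y' - y)) (x' - x) (y' - y)).
Proof.
  intros Hq Hq' Ht. assert (Hs := seg_in x y x' y' t Hq Hq' Ht).
  split.
  - eapply line_deriv; eauto.
  - unfold Qf. apply dpl_comb.
    + eapply line_deriv; eauto.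
    + eapply line_deriv; eauto.
Qed.

Lemma T1 x y x' y' : inW x y -> inW x' y' ->
  f x y + (fx x y * (x' - x) + fy x y * (y' - y)) - M * ((x' - x)^2 + (y' - y)^2) <= f x' y'.
Proof.
  intros Hq Hq'.
  assert (L := taylor_lo (fun s => f (x + s * (x' - x)) (y + s * (y' - y)))
    (fun s => fx (x + s * (x' - x)) (y + s * (y' - y)) * (x' - x) +
     fy (x + s * (x' - x)) (y + s * (y' - y)) * (y' - y))
    (fun s => Qf (x + s * (x' - x)) (y + s * (y' - y)) (x' - x) (y' - y))
    (- (2 * M) * ((x' - x)^2 + (y' - y)^2))).
  simpl in L.
  replace (x + 1 * (x' - x)) with x' in L by ring.
  replace (y + 1 * (y' - y)) with y' in L by ring.
  replace (x + 0 * (x' - x)) with x in L by ring.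
  replace (y + 0 * (y' - y)) with y in L by ring.
  assert (HH: f x y + (fx x y * (x' - x) + fy x y * (y' - y)) +
      - (2 * M) * ((x' - x) * ((x' - x) * 1) + (y' - y) * ((y' - y) * 1)) / 2 <= f x' y').
  { apply L.
    - intros t Ht; apply (G_derivs x y x' y' t Hq Hq' Ht).
    - intros t Ht; apply (G_derivs x y x' y' t Hq Hq' Ht).
    - intros t Ht. apply HQlo. apply seg_in; auto. }
  simpl. lra.
Qed.

Lemma T2 x y x' y' : inW x y -> inW x' y' ->
  f x' y' <= f x y + (fx x y * (x' - x) + fy x y * (y' - y)) - μ / 2 * ((x' - x)^2 + (y' - y)^2).
Proof.
  intros Hq Hq'.
  assert (L := taylor_up (fun s => f (x + s * (x' - x)) (y + s * (y' - y)))
    (fun s => fx (x + s * (x' - x)) (y + s * (y' - y)) * (x' - x) +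
     fy (x + s * (x' - x)) (y + s * (y' - y)) * (y' - y))
    (fun s => Qf (x + s * (x' - x)) (y + s * (y' - y)) (x' - x) (y' - y))
    (- μ * ((x' - x)^2 + (y' - y)^2))).
  simpl in L.
  replace (x + 1 * (x' - x)) with x' in L by ring.
  replace (y + 1 * (y' - y)) with y' in L by ring.
  replace (x + 0 * (x' - x)) with x in L by ring.
  replace (y + 0 * (y' - y)) with y in L by ring.
  assert (HH: f x' y' <= f x y + (fx x y * (x' - x) + fy x y * (y' - y)) +
      - μ * ((x' - x) * ((x' - x) * 1) + (y' - y) * ((y' - y) * 1)) / 2).
  { apply L.
    - intros t Ht; apply (G_derivs x y x' y' t Hq Hq' Ht).
    - intros t Ht; apply (G_derivs x y x' y' t Hq Hq' Ht).
    - intros t Ht. apply HQup. apply seg_in; auto. }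
  simpl. lra.
Qed.


Lemma sq_le a D : Rabs a <= D -> a^2 <= D^2.
Proof. intros H. rewrite <- pow2_abs. generalize (Rabs_pos a); nra. Qed.

Lemma inW_p : inW px py.
Proof. unfold inW. replace (px - px) with 0 by ring. replace (py - py) with 0 by ring.
  rewrite Rabs_R0; lra. Qed.

Lemma grad_bound x y e1 e2 H D : Rabs (x - px) <= D -> Rabs (y - py) <= D -> D > 0 ->
  2 * D < δ -> H > 0 -> Rabs e1 <= H -> Rabs e2 <= H ->
  - (fx x y * e1 + fy x y * e2) <= 4 * M * H * D.
Proof.
  intros Hx Hy HD HDd HH He1 He2.
  set (l := D / H).
  assert (Hl : l * H = D) by (unfold l; field; lra).
  assert (Hl0 : l > 0) by (unfold l; apply Rdiv_lt_0_compat; lra).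
  assert (Hq : inW x y) by (split; lra).
  assert (Hz : inW (x - l * e1) (y - l * e2)).
  { split.
    - replace (x - l * e1 - px) with ((x - px) + (- l * e1)) by ring.
      eapply Rle_lt_trans. apply Rabs_triang. rewrite Rabs_mult, Rabs_Ropp, (Rabs_pos_eq l) by lra.
      assert (l * Rabs e1 <= l * H) by (apply Rmult_le_compat_l; lra). lra.
    - replace (y - l * e2 - py) with ((y - py) + (- l * e2)) by ring.
      eapply Rle_lt_trans. apply Rabs_triang. rewrite Rabs_mult, Rabs_Ropp, (Rabs_pos_eq l) by lra.
      assert (l * Rabs e2 <= l * H) by (apply Rmult_le_compat_l; lra). lra. }
  pose proof (T1 x y (x - l * e1) (y - l * e2) Hq Hz) as A1.
  pose proof (T2 px py (x - l * e1) (y - l * e2) inW_p Hz) as A2.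
  pose proof (T1 px py x y inW_p Hq) as A3.
  rewrite Hgx0, Hgy0 in A2, A3.
  assert (B1 : (x - l * e1 - x)^2 + (y - l * e2 - y)^2 <= 2 * D^2).
  { replace (x - l * e1 - x) with (- (l * e1)) by ring.
    replace (y - l * e2 - y) with (- (l * e2)) by ring.
    assert (Rabs (-(l*e1)) <= D). { rewrite Rabs_Ropp, Rabs_mult, (Rabs_pos_eq l) by lra.
      rewrite <- Hl. apply Rmult_le_compat_l; lra. }
    assert (Rabs (-(l*e2)) <= D). { rewrite Rabs_Ropp, Rabs_mult, (Rabs_pos_eq l) by lra.
      rewrite <- Hl. apply Rmult_le_compat_l; lra. }
    apply sq_le in H0. apply sq_le in H1. lra. }
  assert (B2 : (x - px)^2 + (y - py)^2 <= 2 * D^2).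
  { apply sq_le in Hx. apply sq_le in Hy. lra. }
  assert (B3 : 0 <= μ / 2 * ((x - l * e1 - px) ^ 2 + (y - l * e2 - py) ^ 2)).
  { apply Rmult_le_pos. lra. generalize (pow2_ge_0 (x - l * e1 - px)) (pow2_ge_0 (y - l * e2 - py)); lra. }
  assert (C : l * (- (fx x y * e1 + fy x y * e2)) <= 4 * M * D^2).
  { assert (M * ((x - l * e1 - x)^2 + (y - l * e2 - y)^2) <= M * (2 * D^2)) by (apply Rmult_le_compat_l; lra).
    assert (M * ((x - px)^2 + (y - py)^2) <= M * (2 * D^2)) by (apply Rmult_le_compat_l; lra).
    replace (fx x y * (x - l * e1 - x) + fy x y * (y - l * e2 - y)) with
      (l * (- (fx x y * e1 + fy x y * e2))) in A1 by ring.
    lra. }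
  assert (E : 4 * M * D^2 = l * (4 * M * H * D)) by (rewrite <- Hl; ring).
  rewrite E in C. apply Rmult_le_reg_l in C; lra.
Qed.


Lemma mu_le : μ <= 2 * M.
Proof.
  pose proof (HQup px py inW_p 1 0). pose proof (HQlo px py inW_p 1 0). lra.
Qed.

Lemma improve x y z1 z2 H D : Rabs (x - px) <= D -> Rabs (y - py) <= D ->
  D^2 <= (x - px)^2 + (y - py)^2 -> 2 * D < δ -> H > 0 -> H < D ->
  64 * M^2 * H <= μ^2 * D ->
  Rabs (z1 - (x + (16 * M * H / (μ * D)) * (px - x))) <= H ->
  Rabs (z2 - (y + (16 * M * H / (μ * D)) * (py - y))) <= H ->
  f x y < f z1 z2.
Proof.
  intros Hx Hy HDm HDd HH HHD Hc Hz1 Hz2.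
  set (t := 16 * M * H / (μ * D)) in *.
  assert (HD : D > 0) by lra.
  assert (Hmu2 := mu_le).
  assert (HmD : μ * D > 0) by nra.
  assert (Ht : t * (μ * D) = 16 * M * H) by (unfold t; field; lra).
  assert (Ht0 : 0 < t) by (unfold t; apply Rdiv_lt_0_compat; nra).
  assert (Ht1 : 4 * M * t <= μ).
  { apply (Rmult_le_reg_r (μ * D)); auto.
    replace (4 * M * t * (μ * D)) with (4 * M * (t * (μ * D))) by ring. rewrite Ht. nra. }
  assert (Ht2 : t <= 1).
  { assert (4 * M * t <= 4 * M * 1) by nra. nra. }
  set (v1 := px - x) in *. set (v2 := py - y) in *.
  set (e1 := z1 - (x + t * v1)) in *. set (e2 := z2 - (y + t * v2)) in *.
  assert (Hq : inW x y) by (split; lra).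
  assert (Hz : inW z1 z2).
  { split.
    - replace (z1 - px) with ((1 - t) * (x - px) + e1) by (unfold e1, v1; ring).
      eapply Rle_lt_trans. apply Rabs_triang. rewrite Rabs_mult, (Rabs_pos_eq (1 - t)) by lra.
      assert ((1 - t) * Rabs (x - px) <= 1 * D) by (apply Rmult_le_compat; try lra; apply Rabs_pos).
      lra.
    - replace (z2 - py) with ((1 - t) * (y - py) + e2) by (unfold e2, v2; ring).
      eapply Rle_lt_trans. apply Rabs_triang. rewrite Rabs_mult, (Rabs_pos_eq (1 - t)) by lra.
      assert ((1 - t) * Rabs (y - py) <= 1 * D) by (apply Rmult_le_compat; try lra; apply Rabs_pos).
      lra. }
  pose proof (T1 x y z1 z2 Hq Hz) as A1.
  pose proof (T2 x y px py Hq inW_p) as A2.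
  pose proof (T2 px py x y inW_p Hq) as A3.
  rewrite Hgx0, Hgy0 in A3.
  pose proof (grad_bound x y e1 e2 H D Hx Hy HD HDd HH Hz1 Hz2) as A4.
  set (K := v1^2 + v2^2) in *.
  assert (HK : D^2 <= K) by (unfold K, v1, v2;
    replace ((px - x)^2) with ((x - px)^2) by ring; replace ((py - y)^2) with ((y - py)^2) by ring; lra).
  assert (HG : μ * K <= fx x y * v1 + fy x y * v2).
  { replace ((x - px)^2 + (y - py)^2) with K in A3 by (unfold K, v1, v2; ring).
    fold v1 v2 in A2. fold K in A2. lra. }
  replace (z1 - x) with (t * v1 + e1) in A1 by (unfold e1; ring).
  replace (z2 - y) with (t * v2 + e2) in A1 by (unfold e2; ring).
  assert (S1 : (t * v1 + e1)^2 + (t * v2 + e2)^2 <= 2 * t^2 * K + 4 * H^2).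
  { assert (e1^2 <= H^2) by (apply sq_le; auto). assert (e2^2 <= H^2) by (apply sq_le; auto).
    assert ((t * v1 + e1)^2 <= 2 * (t^2 * v1^2) + 2 * e1^2) by
      (generalize (pow2_ge_0 (t * v1 - e1)); intro; nra).
    assert ((t * v2 + e2)^2 <= 2 * (t^2 * v2^2) + 2 * e2^2) by
      (generalize (pow2_ge_0 (t * v2 - e2)); intro; nra).
    unfold K. replace (2 * t^2 * (v1^2 + v2^2)) with (2 * (t^2 * v1^2) + 2 * (t^2 * v2^2)) by ring.
    lra. }
  assert (S2 : M * ((t * v1 + e1)^2 + (t * v2 + e2)^2) <= M * (2 * t^2 * K + 4 * H^2))
    by (apply Rmult_le_compat_l; lra).
  assert (S3 : t * (μ * K) <= t * (fx x y * v1 + fy x y * v2)) by (apply Rmult_le_compat_l; lra).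
  assert (HK0 : 0 <= K) by (generalize (pow2_ge_0 D); lra).
  assert (S4 : 2 * M * t^2 * K <= t * μ * K / 2).
  { assert (0 <= t * K) by (apply Rmult_le_pos; lra).
    assert (2 * M * t * (t * K) <= μ / 2 * (t * K)) by (apply Rmult_le_compat_r; lra).
    replace (2 * M * t^2 * K) with (2 * M * t * (t * K)) by ring.
    replace (t * μ * K / 2) with (μ / 2 * (t * K)) by field. lra. }
  assert (S5 : t * μ * D^2 <= t * μ * K).
  { apply Rmult_le_compat_l; auto. apply Rmult_le_pos; lra. }
  assert (S6 : t * μ * D^2 = 16 * M * H * D) by (rewrite <- Ht; ring).
  assert (S7 : 0 < 4 * M * H * (D - H)) by (apply Rmult_lt_0_compat; nra).
  assert (E : fx x y * (t * v1 + e1) + fy x y * (t * v2 + e2) =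
     t * (fx x y * v1 + fy x y * v2) + (fx x y * e1 + fy x y * e2)) by ring.
  rewrite E in A1.
  lra.
Qed.

Lemma idx_bound d X h : h > 0 -> Rabs d * h <= X * h -> Rabs d <= X.
Proof. intros Hh H. apply Rmult_le_reg_r in H; auto. Qed.

Lemma absmul d h : h > 0 -> Rabs (d * h) = Rabs d * h.
Proof. intros Hh. rewrite Rabs_mult, (Rabs_pos_eq h) by lra. reflexivity. Qed.

Lemma discrete a b : a > 0 -> b > 0 -> 0 < px - δ -> px + δ < a -> 0 < py - δ -> py + δ < b ->
  exists (U : R -> R -> Prop) (r : R),
    nbhd U px py /\ r > 0 /\
    exists N : nat, forall n : nat, (N <= n)%nat -> (1 <= n)%nat ->
      nondegenerate a b f n ->
      exists i j : nat,
        ((i <= n)%nat /\ (j <= n)%nat /\ U (gx a n i) (gy b n j) /\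
         maximal_in_circle a b f n r i j) /\
        (forall i' j' : nat,
           (i' <= n)%nat -> (j' <= n)%nat -> U (gx a n i') (gy b n j') ->
           maximal_in_circle a b f n r i' j' -> i' = i /\ j' = j).
Proof.
  intros Ha Hb Hx1 Hx2 Hy1 Hy2.
  assert (Hmin : Rmin a b > 0) by (unfold Rmin; destruct Rle_dec; lra).
  assert (Hmax : Rmax a b > 0) by (unfold Rmax; destruct Rle_dec; lra).
  assert (Hmina : Rmin a b <= a) by apply Rmin_l.
  assert (Hminb : Rmin a b <= b) by apply Rmin_r.
  set (ρ := Rmax a b / Rmin a b).
  assert (Hρ : ρ > 0) by (unfold ρ; apply Rdiv_lt_0_compat; lra).
  set (c0 := 64 * M^2 / μ^2 + 1).
  set (c1 := 16 * M / μ).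
  set (c3 := 4 * M / μ + 1).
  assert (Hc0' : 64 * M^2 / μ^2 > 0) by (apply Rdiv_lt_0_compat; nra).
  assert (Hc0 : c0 > 1) by (unfold c0; lra).
  assert (Hc1 : c1 > 0) by (unfold c1; apply Rdiv_lt_0_compat; lra).
  assert (Hc3' : 4 * M / μ > 0) by (apply Rdiv_lt_0_compat; lra).
  assert (Hc3 : c3 > 1) by (unfold c3; lra).
  set (r := (c1 + 1 + 2 * c0) * ρ + 1).
  assert (Hr : r > 0) by (unfold r; assert (0 < (c1 + 1 + 2 * c0) * ρ) by (apply Rmult_lt_0_compat; lra); lra).
  assert (Hr1 : c1 * ρ + 1 <= r) by (unfold r; nra).
  assert (Hr2 : 2 * c0 * ρ <= r) by (unfold r; nra).
  exists (fun x y => Rabs (x - px) < δ / 4 /\ Rabs (y - py) < δ / 4), r.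
  split.
  { exists (δ / 4). split. lra. intros x y Hxy. split.
    - rewrite Rabs_minus_sym. eapply Rle_lt_trans. apply (abs_le_dist2 px py x y). auto.
    - rewrite Rabs_minus_sym. eapply Rle_lt_trans. apply (abs_le_dist2' px py x y). auto. }
  split. auto.
  set (Kc := r + c0 + c3 + 2).
  assert (HKc : Kc > 2) by (unfold Kc; lra).
  destruct (INR_unbounded (4 * Kc * Rmax a b / δ)) as [N HN].
  exists N. intros n HNn Hn1 Hnd.
  assert (Hn : 0 < INR n) by (apply lt_0_INR; lia).
  assert (HnN : INR N <= INR n) by (apply le_INR; lia).
  set (h := a / INR n). set (k := b / INR n). set (st := Rmax a b / INR n).
  assert (Hh : h > 0) by (unfold h; apply Rdiv_lt_0_compat; lra).
  assert (Hk : k > 0) by (unfold k; apply Rdiv_lt_0_compat; lra).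
  assert (Hst : st > 0) by (unfold st; apply Rdiv_lt_0_compat; lra).
  assert (Hhst : h <= st).
  { unfold h, st, Rdiv. apply Rmult_le_compat_r. left; apply Rinv_0_lt_compat; lra. apply Rmax_l. }
  assert (Hkst : k <= st).
  { unfold k, st, Rdiv. apply Rmult_le_compat_r. left; apply Rinv_0_lt_compat; lra. apply Rmax_r. }
  assert (Hsth : st <= ρ * h).
  { assert (E : ρ * h = st * (a / Rmin a b)) by (unfold ρ, h, st; field; lra).
    assert (a / Rmin a b >= 1).
    { apply Rle_ge. apply (Rmult_le_reg_r (Rmin a b)); auto.
      unfold Rdiv; rewrite Rmult_assoc, Rinv_l by lra. lra. }
    rewrite E. nra. }
  assert (Hstk : st <= ρ * k).
  { assert (E : ρ * k = st * (b / Rmin a b)) by (unfold ρ, k, st; field; lra).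
    assert (b / Rmin a b >= 1).
    { apply Rle_ge. apply (Rmult_le_reg_r (Rmin a b)); auto.
      unfold Rdiv; rewrite Rmult_assoc, Rinv_l by lra. lra. }
    rewrite E. nra. }
  assert (Hsmall : Kc * st < δ / 4).
  { apply (Rmult_lt_reg_r (INR n)); auto.
    replace (Kc * st * INR n) with (Kc * Rmax a b) by (unfold st; field; lra).
    assert (E : 4 * Kc * Rmax a b / δ * δ = 4 * Kc * Rmax a b) by (field; lra).
    assert (INR n * δ > 4 * Kc * Rmax a b / δ * δ) by (apply Rmult_gt_compat_r; lra).
    lra. }
  assert (gxE : forall i, gx a n i = INR i * h) by (intros; unfold gx, h; field; lra).
  assert (gyE : forall j, gy b n j = INR j * k) by (intros; unfold gy, k; field; lra).
  assert (close : forall i j, (i <= n)%nat -> (j <= n)%nat ->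
     Rabs (INR i * h - px) < δ / 4 -> Rabs (INR j * k - py) < δ / 4 ->
     maximal_in_circle a b f n r i j ->
     Rabs (INR i * h - px) <= c0 * st /\ Rabs (INR j * k - py) <= c0 * st).
  { intros i j Hi Hj Hui Huj Hmx.
    set (x := INR i * h) in *. set (y := INR j * k) in *.
    set (D := Rmax (Rabs (x - px)) (Rabs (y - py))).
    destruct (Rle_dec D (c0 * st)) as [Hle|Hgt].
    { split; eapply Rle_trans; try apply Hle. apply Rmax_l. apply Rmax_r. }
    exfalso. apply Rnot_le_lt in Hgt.
    assert (HD1 : Rabs (x - px) <= D) by apply Rmax_l.
    assert (HD2 : Rabs (y - py) <= D) by apply Rmax_r.
    assert (HD3 : D^2 <= (x - px)^2 + (y - py)^2).
    { unfold D, Rmax. destruct Rle_dec.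
      - rewrite pow2_abs. generalize (pow2_ge_0 (x - px)); lra.
      - rewrite pow2_abs. generalize (pow2_ge_0 (y - py)); lra. }
    assert (HD4 : D < δ / 4) by (apply Rmax_lub_lt; auto).
    assert (HHD : st < D) by nra.
    assert (Hc : 64 * M^2 * st <= μ^2 * D).
    { assert (μ^2 * (c0 * st) <= μ^2 * D) by (apply Rmult_le_compat_l; nra).
      assert (μ^2 * (c0 * st) = 64 * M^2 * st + μ^2 * st) by (unfold c0; field; lra).
      nra. }
    set (t := 16 * M * st / (μ * D)).
    assert (HDp : D > 0) by lra.
    assert (Ht0 : t > 0) by (unfold t; apply Rdiv_lt_0_compat; nra).
    assert (HtD : t * D = c1 * st) by (unfold t, c1; field; lra).
    assert (Ht1 : t <= 1).
    { assert (Hm2 := mu_le).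
      assert (16 * M * st <= μ * D).
      { apply (Rmult_le_reg_l μ); auto.
        assert (μ * (16 * M * st) <= (2 * M) * (16 * M * st)) by (apply Rmult_le_compat_r; nra).
        assert (0 <= M^2 * st) by (apply Rmult_le_pos; nra).
        lra. }
      unfold t. apply (Rmult_le_reg_r (μ * D)). nra.
      unfold Rdiv. rewrite Rmult_assoc, Rinv_l by nra. lra. }
    set (m1 := x + t * (px - x)). set (m2 := y + t * (py - y)).
    assert (Hm1 : Rabs (m1 - px) <= Rabs (x - px)).
    { unfold m1. replace (x + t * (px - x) - px) with ((1 - t) * (x - px)) by ring.
      rewrite Rabs_mult, (Rabs_pos_eq (1 - t)) by lra.
      assert (0 <= Rabs (x - px)) by apply Rabs_pos. nra. }
    assert (Hm2 : Rabs (m2 - py) <= Rabs (y - py)).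
    { unfold m2. replace (y + t * (py - y) - py) with ((1 - t) * (y - py)) by ring.
      rewrite Rabs_mult, (Rabs_pos_eq (1 - t)) by lra.
      assert (0 <= Rabs (y - py)) by apply Rabs_pos. nra. }
    assert (Hm1' : 0 <= m1 < a).
    { assert (Rabs (m1 - px) < δ / 4) by lra. apply Rabs_def2 in H. lra. }
    assert (Hm2' : 0 <= m2 < b).
    { assert (Rabs (m2 - py) < δ / 4) by lra. apply Rabs_def2 in H. lra. }
    destruct (grid_floor m1 a n Ha ltac:(lia) Hm1') as [i2 [Hi2 Hi2']]. fold h in Hi2'.
    destruct (grid_floor m2 b n Hb ltac:(lia) Hm2') as [j2 [Hj2 Hj2']]. fold k in Hj2'.
    assert (Himp : f x y < f (INR i2 * h) (INR j2 * k)).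
    { apply (improve x y (INR i2 * h) (INR j2 * k) st D); auto; try lra.
      - fold t. fold m1. apply Rabs_le. lra.
      - fold t. fold m2. apply Rabs_le. lra. }
    assert (Hcirc : in_grid_circle n r i j i2 j2).
    { split; [auto|split; [auto|]]. apply Rmax_lub.
      - apply (idx_bound _ _ h Hh). rewrite <- absmul by auto.
        replace ((INR i2 - INR i) * h) with ((INR i2 * h - m1) + (m1 - x)) by (unfold x; ring).
        eapply Rle_trans. apply Rabs_triang.
        replace (m1 - x) with (t * (px - x)) by (unfold m1; ring).
        rewrite Rabs_mult, (Rabs_pos_eq t) by lra. rewrite (Rabs_minus_sym px).
        assert (t * Rabs (x - px) <= t * D) by (apply Rmult_le_compat_l; lra).
        assert (Rabs (INR i2 * h - m1) <= h) by (apply Rabs_le; lra).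
        assert (c1 * st <= c1 * (ρ * h)) by (apply Rmult_le_compat_l; lra).
        nra.
      - apply (idx_bound _ _ k Hk). rewrite <- absmul by auto.
        replace ((INR j2 - INR j) * k) with ((INR j2 * k - m2) + (m2 - y)) by (unfold y; ring).
        eapply Rle_trans. apply Rabs_triang.
        replace (m2 - y) with (t * (py - y)) by (unfold m2; ring).
        rewrite Rabs_mult, (Rabs_pos_eq t) by lra. rewrite (Rabs_minus_sym py).
        assert (t * Rabs (y - py) <= t * D) by (apply Rmult_le_compat_l; lra).
        assert (Rabs (INR j2 * k - m2) <= k) by (apply Rabs_le; lra).
        assert (c1 * st <= c1 * (ρ * k)) by (apply Rmult_le_compat_l; lra).
        nra. }
    specialize (Hmx i2 j2 Hcirc). rewrite !gxE, !gyE in Hmx. fold x y in Hmx. lra.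
  }
  assert (Hpa : 0 <= px < a) by lra.
  assert (Hpb : 0 <= py < b) by lra.
  destruct (grid_floor px a n Ha ltac:(lia) Hpa) as [i0 [Hi0 Hi0']]. fold h in Hi0'.
  destruct (grid_floor py b n Hb ltac:(lia) Hpb) as [j0 [Hj0 Hj0']]. fold k in Hj0'.
  assert (Hst4 : st < δ / 4) by nra.
  assert (Hq0x : Rabs (INR i0 * h - px) <= st) by (apply Rabs_le; lra).
  assert (Hq0y : Rabs (INR j0 * k - py) <= st) by (apply Rabs_le; lra).
  destruct (max2 n n (fun i j => Rabs (INR i * h - px) < δ / 4 /\ Rabs (INR j * k - py) < δ / 4)
              (fun i j => f (INR i * h) (INR j * k))) as [is [js [His [Hjs [[Hpi Hpj] Hbest]]]]].
  { exists i0, j0. repeat split; auto; lra. }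
  set (xs := INR is * h) in *. set (ys := INR js * k) in *.
  assert (Hinq0 : inW (INR i0 * h) (INR j0 * k)) by (split; lra).
  assert (Hinqs : inW xs ys) by (split; lra).
  pose proof (T1 px py _ _ inW_p Hinq0) as A1.
  pose proof (T2 px py _ _ inW_p Hinqs) as A2.
  rewrite Hgx0, Hgy0 in A1, A2.
  assert (A3 : f (INR i0 * h) (INR j0 * k) <= f xs ys) by (apply Hbest; auto; lra).
  assert (B1 : (INR i0 * h - px)^2 + (INR j0 * k - py)^2 <= 2 * st^2).
  { apply sq_le in Hq0x. apply sq_le in Hq0y. lra. }
  assert (B1' : M * ((INR i0 * h - px)^2 + (INR j0 * k - py)^2) <= M * (2 * st^2))
    by (apply Rmult_le_compat_l; lra).
  assert (B2 : μ * ((xs - px)^2 + (ys - py)^2) <= 4 * M * st^2) by lra.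
  assert (Hbnd : forall z, z^2 <= (xs - px)^2 + (ys - py)^2 -> Rabs z <= c3 * st).
  { intros z Hz. destruct (Rle_dec (Rabs z) (c3 * st)) as [|Hgt]; auto. exfalso.
    apply Rnot_le_lt in Hgt.
    assert (z^2 > (c3 * st)^2).
    { rewrite <- pow2_abs. assert (0 <= c3 * st) by nra. nra. }
    assert ((c3 * st)^2 >= c3 * st^2).
    { replace ((c3 * st)^2) with (c3 * (c3 * st^2)) by ring.
      assert (0 <= st^2) by nra.
      assert (c3 * (c3 * st^2) >= 1 * (c3 * st^2)) by (apply Rmult_ge_compat_r; nra). lra. }
    assert (μ * (c3 * st^2) = 4 * M * st^2 + μ * st^2) by (unfold c3; field; lra).
    assert (μ * z^2 > μ * (c3 * st^2)) by (apply Rmult_lt_compat_l; lra).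
    assert (μ * z^2 <= μ * ((xs - px)^2 + (ys - py)^2)) by (apply Rmult_le_compat_l; lra).
    assert (0 < μ * st^2) by (apply Rmult_lt_0_compat; nra).
    lra. }
  assert (Hcbx : Rabs (xs - px) <= c3 * st) by (apply Hbnd; generalize (pow2_ge_0 (ys - py)); lra).
  assert (Hcby : Rabs (ys - py) <= c3 * st) by (apply Hbnd; generalize (pow2_ge_0 (xs - px)); lra).
  assert (Hmaxs : maximal_in_circle a b f n r is js).
  { intros l m [Hl [Hm Hlm]]. rewrite !gxE, !gyE. fold xs ys.
    apply Hbest; auto. split.
    - assert (Rabs (INR l - INR is) <= r) by (eapply Rle_trans; [apply Rmax_l|apply Hlm]).
      replace (INR l * h - px) with ((INR l - INR is) * h + (xs - px)) by (unfold xs; ring).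
      eapply Rle_lt_trans. apply Rabs_triang. rewrite absmul by auto.
      assert (Rabs (INR l - INR is) * h <= r * st).
      { assert (Rabs (INR l - INR is) * h <= r * h) by (apply Rmult_le_compat_r; lra).
        assert (r * h <= r * st) by (apply Rmult_le_compat_l; lra). lra. }
      unfold Kc in Hsmall. nra.
    - assert (Rabs (INR m - INR js) <= r) by (eapply Rle_trans; [apply Rmax_r|apply Hlm]).
      replace (INR m * k - py) with ((INR m - INR js) * k + (ys - py)) by (unfold ys; ring).
      eapply Rle_lt_trans. apply Rabs_triang. rewrite absmul by auto.
      assert (Rabs (INR m - INR js) * k <= r * st).
      { assert (Rabs (INR m - INR js) * k <= r * k) by (apply Rmult_le_compat_r; lra).
        assert (r * k <= r * st) by (apply Rmult_le_compat_l; lra). lra. }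
      unfold Kc in Hsmall. nra. }
  exists is, js. split.
  { repeat split; auto; rewrite ?gxE, ?gyE; auto. }
  intros i' j' Hi' Hj' HU' Hmax'.
  rewrite gxE, gyE in HU'. destruct HU' as [HU1 HU2].
  destruct (close is js His Hjs Hpi Hpj Hmaxs) as [Cx Cy].
  destruct (close i' j' Hi' Hj' HU1 HU2 Hmax') as [Cx' Cy'].
  assert (Hdx : Rabs (INR i' - INR is) <= r).
  { eapply Rle_trans; [|apply Hr2]. apply (idx_bound _ _ h Hh). rewrite <- absmul by auto.
    replace ((INR i' - INR is) * h) with ((INR i' * h - px) - (xs - px)) by (unfold xs; ring).
    eapply Rle_trans. apply Rabs_triang. rewrite Rabs_Ropp.
    assert (c0 * st <= c0 * (ρ * h)) by (apply Rmult_le_compat_l; lra). fold xs in Cx. lra. }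
  assert (Hdy : Rabs (INR j' - INR js) <= r).
  { eapply Rle_trans; [|apply Hr2]. apply (idx_bound _ _ k Hk). rewrite <- absmul by auto.
    replace ((INR j' - INR js) * k) with ((INR j' * k - py) - (ys - py)) by (unfold ys; ring).
    eapply Rle_trans. apply Rabs_triang. rewrite Rabs_Ropp.
    assert (c0 * st <= c0 * (ρ * k)) by (apply Rmult_le_compat_l; lra). fold ys in Cy. lra. }
  assert (F1 := Hmaxs i' j').
  assert (F2 := Hmax' is js).
  rewrite !gxE, !gyE in F1, F2. fold xs ys in F1, F2.
  assert (E1 : f (INR i' * h) (INR j' * k) <= f xs ys).
  { apply F1. split; [auto|split; [auto|]]. apply Rmax_lub; auto. }
  assert (E2 : f xs ys <= f (INR i' * h) (INR j' * k)).
  { apply F2. split; [auto|split; [auto|]]. apply Rmax_lub.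
    rewrite <- Rabs_Ropp. replace (- (INR is - INR i')) with (INR i' - INR is) by ring. auto.
    rewrite <- Rabs_Ropp. replace (- (INR js - INR j')) with (INR j' - INR js) by ring. auto. }
  destruct (Nat.eq_dec i' is) as [e1|n1]; destruct (Nat.eq_dec j' js) as [e2|n2]; auto;
  exfalso; (apply (Hnd i' j' is js); auto; [intro Heq; inversion Heq; lia |
    rewrite !gxE, !gyE; fold xs ys; lra]).
Qed.

End Core.

Lemma ext_deriv_x (g1 g2 : R -> R -> R) x y l :
  locally_2d (fun u v => g1 u v = g2 u v) x y ->
  derivable_pt_lim (fun t => g1 t y) x l -> derivable_pt_lim (fun t => g2 t y) x l.
Proof.
  intros Hl H. apply is_derive_Reals. apply is_derive_Reals in H.
  eapply is_derive_ext_loc; [|exact H].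
  apply (locally_2d_1d_const_y (fun u v => g1 u v = g2 u v)); auto.
Qed.

Lemma ext_deriv_y (g1 g2 : R -> R -> R) x y l :
  locally_2d (fun u v => g1 u v = g2 u v) x y ->
  derivable_pt_lim (fun t => g1 x t) y l -> derivable_pt_lim (fun t => g2 x t) y l.
Proof.
  intros Hl H. apply is_derive_Reals. apply is_derive_Reals in H.
  eapply is_derive_ext_loc; [|exact H].
  apply (locally_2d_1d_const_x (fun u v => g1 u v = g2 u v)); auto.
Qed.

Lemma cross x E v w : Rabs x <= E -> - (E * (v^2 + w^2) / 2) <= x * (v * w).
Proof.
  intros H.
  assert (H1 : 2 * Rabs (v * w) <= v^2 + w^2).
  { rewrite Rabs_mult. rewrite <- (pow2_abs v), <- (pow2_abs w).
    generalize (pow2_ge_0 (Rabs v - Rabs w)). intro. nra. }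
  assert (H2 : Rabs (x * (v * w)) <= E * Rabs (v * w)).
  { rewrite Rabs_mult. apply Rmult_le_compat_r; auto. apply Rabs_pos. }
  assert (H3 : - (x * (v * w)) <= Rabs (x * (v * w))) by (rewrite <- Rabs_Ropp; apply Rle_abs).
  assert (0 <= E) by (eapply Rle_trans; [apply Rabs_pos|apply H]).
  assert (E * (2 * Rabs (v * w)) <= E * (v^2 + w^2)) by (apply Rmult_le_compat_l; auto).
  lra.
Qed.


Lemma diag_lo x E v : Rabs x <= E -> - (E * v^2) <= x * v^2.
Proof.
  intros H. assert (0 <= v^2) by apply pow2_ge_0.
  assert (- x <= Rabs x) by (rewrite <- Rabs_Ropp; apply Rle_abs).
  assert (0 <= (x + E) * v^2) by (apply Rmult_le_pos; lra). lra.
Qed.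

Lemma diag_hi x E v : Rabs x <= E -> x * v^2 <= E * v^2.
Proof.
  intros H. assert (0 <= v^2) by apply pow2_ge_0.
  assert (x <= Rabs x) by apply Rle_abs.
  assert (0 <= (E - x) * v^2) by (apply Rmult_le_pos; lra). lra.
Qed.

Lemma Q_lower a1 b1 c1 d1 M v w : Rabs a1 <= M -> Rabs b1 <= M -> Rabs c1 <= M -> Rabs d1 <= M ->
  - (2 * M) * (v^2 + w^2) <= (a1 * v + b1 * w) * v + (c1 * v + d1 * w) * w.
Proof.
  intros H1 H2 H3 H4.
  assert (Rabs (b1 + c1) <= 2 * M) by (eapply Rle_trans; [apply Rabs_triang|lra]).
  pose proof (cross (b1 + c1) (2 * M) v w H).
  pose proof (diag_lo a1 M v H1). pose proof (diag_lo d1 M w H4).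
  replace ((a1 * v + b1 * w) * v + (c1 * v + d1 * w) * w) with
    (a1 * v^2 + (b1 + c1) * (v * w) + d1 * w^2) by ring.
  lra.
Qed.

Lemma Q_upper A B C Dd a1 b1 c1 d1 κ ε v w :
  A * v^2 + (B + C) * (v * w) + Dd * w^2 <= - κ * (v^2 + w^2) ->
  Rabs (a1 - A) <= ε -> Rabs (b1 - B) <= ε -> Rabs (c1 - C) <= ε -> Rabs (d1 - Dd) <= ε ->
  (a1 * v + b1 * w) * v + (c1 * v + d1 * w) * w <= - (κ - 2 * ε) * (v^2 + w^2).
Proof.
  intros HQ H1 H2 H3 H4.
  assert (Rabs (- ((b1 - B) + (c1 - C))) <= 2 * ε).
  { rewrite Rabs_Ropp. eapply Rle_trans; [apply Rabs_triang|lra]. }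
  pose proof (cross _ _ v w H).
  pose proof (diag_hi _ _ v H1). pose proof (diag_hi _ _ w H4).
  replace ((a1 * v + b1 * w) * v + (c1 * v + d1 * w) * w) with
    ((A * v^2 + (B + C) * (v * w) + Dd * w^2) + (a1 - A) * v^2 +
     ((b1 - B) + (c1 - C)) * (v * w) + (d1 - Dd) * w^2) by ring.
  lra.
Qed.

Lemma Qp_bound A B C Dd v w : A < 0 -> Dd < 0 -> A * Dd - ((B + C) / 2)^2 > 0 ->
  A * v^2 + (B + C) * (v * w) + Dd * w^2 <=
  - ((A * Dd - ((B + C) / 2)^2) / (- (A + Dd))) * (v^2 + w^2).
Proof.
  intros HA HD Hdet. set (s := (B + C) / 2) in *.
  assert (HT : - (A + Dd) > 0) by lra.
  apply (Rmult_le_reg_r (- (A + Dd))); auto.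
  replace (- ((A * Dd - s^2) / (- (A + Dd))) * (v^2 + w^2) * (- (A + Dd)))
    with (- ((A * Dd - s^2) * (v^2 + w^2))) by (field; lra).
  assert (E : (A * v^2 + (B + C) * (v * w) + Dd * w^2) * (- (A + Dd)) + (A * Dd - s^2) * (v^2 + w^2)
    = - ((A * v + s * w)^2 + (s * v + Dd * w)^2)) by (unfold s; field).
  generalize (pow2_ge_0 (A * v + s * w)) (pow2_ge_0 (s * v + Dd * w)). lra.
Qed.

Lemma min2 x y : x > 0 -> y > 0 -> exists z, z > 0 /\ z <= x /\ z <= y.
Proof. intros. exists (Rmin x y). split. unfold Rmin; destruct Rle_dec; lra.
  split. apply Rmin_l. apply Rmin_r. Qed.

Theorem theorem1 (a b : R) (f : R -> R -> R) (px py : R) :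
  a > 0 -> b > 0 ->
  C3_on_D a b f ->
  (0 < px < a /\ 0 < py < b) ->
  local_max_D a b f px py ->
  hessian_neg_def f px py ->
  exists (U : R -> R -> Prop) (r : R),
    nbhd U px py /\ r > 0 /\
    exists N : nat, forall n : nat, (N <= n)%nat -> (1 <= n)%nat ->
      nondegenerate a b f n ->
      exists i j : nat,
        ((i <= n)%nat /\ (j <= n)%nat /\ U (gx a n i) (gy b n j) /\
         maximal_in_circle a b f n r i j) /\
        (forall i' j' : nat,
           (i' <= n)%nat -> (j' <= n)%nat -> U (gx a n i') (gy b n j') ->
           maximal_in_circle a b f n r i' j' -> i' = i /\ j' = j).
Proof.
  intros Ha Hb HC3 Hp Hlm Hhess.
  destruct HC3 as [O [HO [HDO HC]]].
  simpl in HC.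
  destruct HC as [_ [fx [fy [Hfx [Hfy [[Hcx [fxx [fxy [Hfxx [Hfxy [[Hcxx _] [Hcxy _]]]]]]]
    [Hcy [fyx [fyy [Hfyx [Hfyy [[Hcyx _] [Hcyy _]]]]]]]]]]]]].
  destruct Hp as [[Hpx1 Hpx2] [Hpy1 Hpy2]].
  assert (HpO : O px py) by (apply HDO; split; lra).
  destruct Hlm as [d [Hd Hlm]].
  destruct (min2 d (Rmin px (a - px))) as [dx [Hdx1 [Hdx2 Hdx3]]]. auto.
  { unfold Rmin; destruct Rle_dec; lra. }
  assert (Hdx4 := Rmin_l px (a - px)). assert (Hdx5 := Rmin_r px (a - px)).
  destruct (min2 d (Rmin py (b - py))) as [dy [Hdy1 [Hdy2 Hdy3]]]. auto.
  { unfold Rmin; destruct Rle_dec; lra. }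
  assert (Hdy4 := Rmin_l py (b - py)). assert (Hdy5 := Rmin_r py (b - py)).
  assert (Hgx0 : fx px py = 0).
  { pose (pr := exist _ (fx px py) (Hfx px py HpO) : derivable_pt (fun t => f t py) px).
    rewrite <- (derive_pt_eq_0 _ _ _ pr (Hfx px py HpO)).
    apply (deriv_maximum _ (px - dx) (px + dx)). lra. lra.
    intros x Hx1 Hx2. apply Hlm. split; split; lra.
    eapply Rle_lt_trans. apply dist2_le. replace (py - py) with 0 by ring.
    rewrite Rabs_R0, Rplus_0_r. apply Rabs_def1; lra. }
  assert (Hgy0 : fy px py = 0).
  { pose (pr := exist _ (fy px py) (Hfy px py HpO) : derivable_pt (fun t => f px t) py).
    rewrite <- (derive_pt_eq_0 _ _ _ pr (Hfy px py HpO)).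
    apply (deriv_maximum _ (py - dy) (py + dy)). lra. lra.
    intros y Hy1 Hy2. apply Hlm. split; split; lra.
    eapply Rle_lt_trans. apply dist2_le. replace (px - px) with 0 by ring.
    rewrite Rabs_R0. rewrite Rplus_0_l. apply Rabs_def1; lra. }
  destruct Hhess as [O' [hx [hy [hxx [hxy [hyx [hyy [HO' [HpO' [Hhx [Hhy [Hhxx [Hhxy
    [Hhyx [Hhyy Hneg]]]]]]]]]]]]]]].
  destruct (open_box O px py HO HpO) as [e1 [He1 Hb1]].
  destruct (open_box O' px py HO' HpO') as [e2 [He2 Hb2]].
  destruct (min2 e1 e2 He1 He2) as [e [He [He1' He2']]].
  assert (Hlocx : locally_2d (fun u v => hx u v = fx u v) px py).
  { exists (mkposreal e He). intros u v Hu Hv. simpl in *.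
    apply (uniqueness_limite (fun t => f t v) u).
    apply Hhx; apply Hb2; lra. apply Hfx; apply Hb1; lra. }
  assert (Hlocy : locally_2d (fun u v => hy u v = fy u v) px py).
  { exists (mkposreal e He). intros u v Hu Hv. simpl in *.
    apply (uniqueness_limite (fun t => f u t) v).
    apply Hhy; apply Hb2; lra. apply Hfy; apply Hb1; lra. }
  assert (E1 : fxx px py = hxx px py).
  { apply (uniqueness_limite (fun t => fx t py) px). apply Hfxx; auto.
    apply (ext_deriv_x hx fx); auto. }
  assert (E2 : fxy px py = hxy px py).
  { apply (uniqueness_limite (fun t => fx px t) py). apply Hfxy; auto.
    apply (ext_deriv_y hx fx); auto. }
  assert (E3 : fyx px py = hyx px py).
  { apply (uniqueness_limite (fun t => fy t py) px). apply Hfyx; auto.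
    apply (ext_deriv_x hy fy); auto. }
  assert (E4 : fyy px py = hyy px py).
  { apply (uniqueness_limite (fun t => fy px t) py). apply Hfyy; auto.
    apply (ext_deriv_y hy fy); auto. }
  rewrite <- E1, <- E2, <- E3, <- E4 in Hneg.
  set (A := fxx px py) in *. set (B := fxy px py) in *.
  set (C := fyx px py) in *. set (Dd := fyy px py) in *.
  assert (HA : A < 0).
  { specialize (Hneg 1 0 ltac:(left; lra)). lra. }
  assert (HD : Dd < 0).
  { specialize (Hneg 0 1 ltac:(right; lra)). lra. }
  set (s := (B + C) / 2).
  assert (Hdet : A * Dd - s^2 > 0).
  { specialize (Hneg s (- A) ltac:(right; lra)).
    replace (s * (A * s + B * - A) + - A * (C * s + Dd * - A)) with (A * (A * Dd - s^2)) in Hneg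
      by (unfold s; field).
    destruct (Rle_or_lt (A * Dd - s^2) 0) as [Hle|]; auto.
    assert (0 <= A * (A * Dd - s^2)) by nra. lra. }
  set (κ := (A * Dd - s^2) / (- (A + Dd))).
  assert (Hκ : κ > 0) by (unfold κ; apply Rdiv_lt_0_compat; lra).
  set (ε := κ / 4).
  assert (Hε : ε > 0) by (unfold ε; lra).
  destruct (Hcxx px py HpO ε Hε) as [d1 [Hd1 Hc1]].
  destruct (Hcxy px py HpO ε Hε) as [d2 [Hd2 Hc2]].
  destruct (Hcyx px py HpO ε Hε) as [d3 [Hd3 Hc3]].
  destruct (Hcyy px py HpO ε Hε) as [d4 [Hd4 Hc4]].
  destruct (min2 (d1/2) (d2/2)) as [z1 [Hz1 [Hz1a Hz1b]]]; try lra.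
  destruct (min2 (d3/2) (d4/2)) as [z2 [Hz2 [Hz2a Hz2b]]]; try lra.
  destruct (min2 z1 z2 Hz1 Hz2) as [z3 [Hz3 [Hz3a Hz3b]]].
  destruct (min2 z3 e1 Hz3 He1) as [z4 [Hz4 [Hz4a Hz4b]]].
  destruct (min2 (px/2) ((a - px)/2)) as [z5 [Hz5 [Hz5a Hz5b]]]; try lra.
  destruct (min2 (py/2) ((b - py)/2)) as [z6 [Hz6 [Hz6a Hz6b]]]; try lra.
  destruct (min2 z5 z6 Hz5 Hz6) as [z7 [Hz7 [Hz7a Hz7b]]].
  destruct (min2 z4 z7 Hz4 Hz7) as [δ [Hδ [Hδa Hδb]]].
  set (μ := κ / 2).
  set (M := Rabs A + Rabs B + Rabs C + Rabs Dd + ε).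
  assert (Hdist : forall x y, inW px py δ x y -> dist2 px py x y < 2 * δ).
  { intros x y [H1 H2]. eapply Rle_lt_trans. apply dist2_le.
    rewrite (Rabs_minus_sym px), (Rabs_minus_sym py). lra. }
  assert (Hent : forall x y, inW px py δ x y ->
    Rabs (fxx x y - A) <= ε /\ Rabs (fxy x y - B) <= ε /\
    Rabs (fyx x y - C) <= ε /\ Rabs (fyy x y - Dd) <= ε).
  { intros x y Hxy. pose proof (Hdist x y Hxy).
    repeat split; left; [apply Hc1|apply Hc2|apply Hc3|apply Hc4]; lra. }
  apply (discrete f fx fy fxx fxy fyx fyy O px py δ μ M); auto.
  - intros x y [H1 H2]. apply Hb1; lra.
  - intros x y Hxy v w. destruct (Hent x y Hxy) as [F1 [F2 [F3 F4]]].
    unfold Qf.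
    replace (- μ * (v^2 + w^2)) with (- (κ - 2 * ε) * (v^2 + w^2)) by (unfold μ, ε; field).
    apply (Q_upper A B C Dd); auto.
    apply Qp_bound; auto.
  - intros x y Hxy v w. destruct (Hent x y Hxy) as [F1 [F2 [F3 F4]]].
    unfold Qf. apply Q_lower.
    + replace (fxx x y) with ((fxx x y - A) + A) by ring. eapply Rle_trans. apply Rabs_triang.
      unfold M. generalize (Rabs_pos B) (Rabs_pos C) (Rabs_pos Dd). lra.
    + replace (fxy x y) with ((fxy x y - B) + B) by ring. eapply Rle_trans. apply Rabs_triang.
      unfold M. generalize (Rabs_pos A) (Rabs_pos C) (Rabs_pos Dd). lra.
    + replace (fyx x y) with ((fyx x y - C) + C) by ring. eapply Rle_trans. apply Rabs_triang.
      unfold M. generalize (Rabs_pos B) (Rabs_pos A) (Rabs_pos Dd). lra.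
    + replace (fyy x y) with ((fyy x y - Dd) + Dd) by ring. eapply Rle_trans. apply Rabs_triang.
      unfold M. generalize (Rabs_pos B) (Rabs_pos C) (Rabs_pos A). lra.
  - unfold μ; lra.
  - unfold M. generalize (Rabs_pos A) (Rabs_pos B) (Rabs_pos C) (Rabs_pos Dd). lra.
  - lra.
  - lra.
  - lra.
  - lra.
Qed.
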